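(* Let $p$ be a prime, $\Phi:\mathbb{N}\to\mathbb{N}$ strictly increasing, and $f\in\mathcal{F}(\Phi)$. Let $h,n_0,u$ be nonnegative integers with $u<p^{1+\Phi(n_0)}$ and $f(u)\equiv 0\pmod{p^{1+h+n_0}}$. Suppose there is a sequence $(S(n))_{n\ge n_0}$ of sets of integers with $S(n)\subset\big(0,p^{\Phi(n+1)-\Phi(n)}\big)$ and $\operatorname{Card} S(n)=p-1$, such that for all nonnegative integers $n,m$ with $n\ge n_0$, $m<p^{1+\Phi(n)}$ and $m\equiv u\pmod{p^{1+\Phi(n_0)}}$, \[ \big\{\, b(\Phi,f;m+ip^{1+\Phi(n)}) \bmod p^{h+1} \;:\; i\in S(n)\,\big\} = \big\{\, ip^h \bmod p^{h+1} \;:\; i=1,2,\dots,p-1\,\big\}. \] Then there exists $\xi\in\mathbb{Z}_p$ such that (a) $f(\xi)=0$, (b) $\xi\equiv u\pmod{p^{1+\Phi(n_0)}}$, and (c) $\rho(\xi;n+1)\in\{0\}\cup S(n)$ for every $n\ge n_0$. If moreover $b(\Phi,f;m)\equiv 0\pmod{p^h}$ for every integer $m\ge p^{1+\Phi(n_0)}$ with $m\equiv u\pmod{p^{1+\Phi(n_0)}}$, then the $\xi\in\mathbb{Z}_p$ satisfying (a), (b), (c) is unique.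
   Context: $\mathbb{N}=\{0,1,2,\dots\}$. $v_p$, $|\cdot|_p$ are the $p$-adic valuation and absolute value ($v_p(p)=1$, $|p|_p=p^{-1}$). Each $x\in\mathbb{Z}_p$ is written $x=\sum_{i\ge0}x_ip^i$ with digits $x_i\in\{0,\dots,p-1\}$; for a nonnegative integer $m$, $m_i$ are its base-$p$ digits. Set $\Phi(-1):=-1$. $\tau(m)=\tau(\Phi;m):=\min\{h\in\mathbb{N}: m<p^{1+\Phi(h)}\}$. For $m\ge p^{1+\Phi(0)}$, $M(m):=\sum_{i=\Phi(\tau(m)-1)+1}^{\Phi(\tau(m))} m_ip^i$. $B(\Phi,f;m):=f(m)$ if $m<p^{1+\Phi(0)}$ and $B(\Phi,f;m):=f(m)-f(m-M(m))$ otherwise. $\mathcal{F}(\Phi)$ is the class of continuous $f:\mathbb{Z}_p\to\mathbb{Z}_p$ such that for every positive integer $n$ and all $x,y\in\mathbb{Z}_p$: if $|x-y|_p\le p^{-1-\Phi(n-1)}$ then $|f(x)-f(y)|_p\le p^{-n}$. For $f\in\mathcal{F}(\Phi)$ one has $v_p(B(\Phi,f;m))\ge\tau(m)$, and one sets $b(\Phi,f;m):=p^{-\tau(m)}B(\Phi,f;m)\in\mathbb{Z}_p$. For $x\in\mathbb{Z}_p$ and $j\in\mathbb{N}$, $\rho(x;j):=p^{-1-\Phi(j-1)}\sum_{i=1+\Phi(j-1)}^{\Phi(j)}x_ip^i$ (a nonnegative integer). *)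

(* Defs.v *)
(* p-adic integers are represented by their base-p digit
   streams x : nat -> nat (digit x i = x_i), valid when every digit is < p. *)
From mathcomp Require Import all_boot.
Set Implicit Arguments. Unset Strict Implicit. Unset Printing Implicit Defensive.

Section PadicDefs.
Variable p : nat.

Definition isZp (x : nat -> nat) : Prop := forall i, x i < p.

Definition trunc (x : nat -> nat) (k : nat) : nat := \sum_(i < k) x i * p ^ i.

Definition digit (m i : nat) : nat := m %/ p ^ i %% p.

Definition emb (m : nat) : nat -> nat := digit m.

(* subtraction in Z_p : digit i of x - y is digit i of ((x-y) mod p^(i+1)) *)
Definition zsub (x y : nat -> nat) : nat -> nat :=
  fun i => ((trunc x i.+1 + p ^ i.+1 - trunc y i.+1) %% p ^ i.+1) %/ p ^ i.

Definition zeroZp (x : nat -> nat) : Prop := forall i, x i = 0.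

Variable Phi : nat -> nat.

(* lev j = 1 + Phi(j-1), with the convention Phi(-1) = -1, so lev 0 = 0 *)
Definition lev (j : nat) : nat := if j is j'.+1 then (Phi j').+1 else 0.

(* tau(m) = min { h : m < p^(1+Phi h) } ; for Phi strictly increasing and
   p >= 2, h = m belongs to this set, so the search over 0..m is exhaustive *)
Definition tau (m : nat) : nat := find (fun h => m < p ^ (Phi h).+1) (iota 0 m.+1).

Definition Mm (m : nat) : nat :=
  \sum_(lev (tau m) <= i < (Phi (tau m)).+1) digit m i * p ^ i.

Variable f : (nat -> nat) -> (nat -> nat).

Definition Bf (m : nat) : nat -> nat :=
  if m < p ^ (Phi 0).+1 then f (emb m) else zsub (f (emb m)) (f (emb (m - Mm m))).

(* b(Phi, f; m) = p^(-tau m) B(Phi,f;m)  (a digit shift, valid as v_p(B) >= tau m) *)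
Definition bf (m : nat) : nat -> nat := fun i => Bf m (i + tau m).

Definition rho (x : nat -> nat) (j : nat) : nat :=
  \sum_(lev j <= i < (Phi j).+1) x i * p ^ (i - lev j).

Definition continuousZp : Prop :=
  forall x, isZp x -> forall n, exists k, forall y, isZp y ->
    trunc x k = trunc y k -> trunc (f x) n = trunc (f y) n.

(* f in F(Phi) : continuous Z_p -> Z_p, and for n >= 1,
   |x - y|_p <= p^(-1-Phi(n-1))  ==>  |f x - f y|_p <= p^(-n) *)
Definition classF : Prop :=
  (forall x, isZp x -> isZp (f x)) /\ continuousZp /\
  forall n, 0 < n -> forall x y, isZp x -> isZp y ->
    trunc x (lev n) = trunc y (lev n) -> trunc (f x) n = trunc (f y) n.

End PadicDefs.

(* Main.v *)
Require Import Defs.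
From mathcomp Require Import all_boot zify.
Set Implicit Arguments. Unset Strict Implicit. Unset Printing Implicit Defensive.

Section Basic.
Variable p : nat.
Hypothesis p_gt1 : 1 < p.
Let p_gt0 : 0 < p. Proof. by apply: ltnW. Qed.
Let pX_gt0 k : 0 < p ^ k. Proof. by rewrite expn_gt0 p_gt0. Qed.

Lemma truncS x k : trunc p x k.+1 = trunc p x k + x k * p ^ k.
Proof. by rewrite /trunc big_ord_recr. Qed.

Lemma trunc0 x : trunc p x 0 = 0.
Proof. by rewrite /trunc big_ord0. Qed.

Lemma trunc_lt x k : isZp p x -> trunc p x k < p ^ k.
Proof.
move=> Hx; elim: k => [|k IH]; first by rewrite trunc0 expn0.
rewrite truncS expnS.
have := Hx k; set P := p ^ k in IH *; set T := trunc p x k in IH *.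
move=> Hk.
apply: (@leq_trans (P + x k * P)); first by rewrite ltn_add2r.
by rewrite -[P in P + _]mul1n -mulnDl leq_mul2r add1n Hk orbT.
Qed.


Lemma trunc_shift x t j :
  trunc p x (t + j) = trunc p x t + p ^ t * trunc p (fun i => x (i + t)) j.
Proof.
elim: j => [|j IH]; first by rewrite addn0 trunc0 muln0 addn0.
by rewrite addnS !truncS IH mulnDr addnA expnD [j + t]addnC mulnCA.
Qed.

Lemma trunc_mod x j k : isZp p x -> j <= k -> trunc p x k %% p ^ j = trunc p x j.
Proof.
move=> Hx jk; rewrite -(subnKC jk) trunc_shift addnC mulnC modnMDl.
by rewrite modn_small // trunc_lt.
Qed.

Lemma trunc_ext x y k : isZp p x -> isZp p y ->
  trunc p x k = trunc p y k -> forall i, i < k -> x i = y i.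
Proof.
move=> Hx Hy E i ik.
have e1 : x i * p ^ i = trunc p x i.+1 - trunc p x i by rewrite truncS addKn.
have e2 : y i * p ^ i = trunc p y i.+1 - trunc p y i by rewrite truncS addKn.
have : x i * p ^ i = y i * p ^ i.
  by rewrite e1 e2 -(trunc_mod Hx (ltnW ik)) -(trunc_mod Hy (ltnW ik)) -(trunc_mod Hx ik) -(trunc_mod Hy ik) E.
by move/eqP; rewrite eqn_pmul2r // => /eqP.
Qed.

Lemma isZp0 : isZp p (fun _ => 0). Proof. by []. Qed.

Lemma trunc_zero0 k : trunc p (fun _ => 0) k = 0.
Proof. by rewrite /trunc big1. Qed.

Lemma trunc_zero x k : isZp p x -> trunc p x k = 0 -> forall i, i < k -> x i = 0.
Proof. move=> Hx E; apply: (trunc_ext Hx isZp0); by rewrite E trunc_zero0. Qed.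

Lemma isZp_emb m : isZp p (emb p m).
Proof. by move=> i; rewrite /emb /digit ltn_pmod. Qed.

Lemma trunc_emb m k : trunc p (emb p m) k = m %% p ^ k.
Proof.
elim: k => [|k IH]; first by rewrite trunc0 expn0 modn1.
rewrite truncS IH /emb /digit modn_divl expnS.
set M := m %% (p * p ^ k).
have -> : m %% p ^ k = M %% p ^ k by rewrite /M modn_dvdm // dvdn_mull.
by rewrite addnC -divn_eq.
Qed.

Lemma trunc_zsub x y k : isZp p x -> isZp p y ->
  trunc p (zsub p x y) k = (trunc p x k + p ^ k - trunc p y k) %% p ^ k.
Proof.
move=> Hx Hy; elim: k => [|k IH]; first by rewrite trunc0 expn0 modn1.
rewrite truncS IH {1}/zsub.
set a := trunc p x k.+1 + p ^ k.+1 - trunc p y k.+1.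
suff -> : (trunc p x k + p ^ k - trunc p y k) %% p ^ k = (a %% p ^ k.+1) %% p ^ k.
  by rewrite addnC -divn_eq.
rewrite modn_dvdm; last by rewrite dvdn_exp2l.
have ea : a = (trunc p x k + p ^ k - trunc p y k) + (x k + (p - 1 - y k)) * p ^ k.
  rewrite /a !truncS.
  have ltT := trunc_lt k Hy; have lty := Hy k.
  have ep : p = y k + 1 + (p - 1 - y k) by lia.
  rewrite expnS {3}ep !mulnDl mul1n.
  set P := p ^ k in ltT *.
  set X := trunc p x k in ltT *; set Y := trunc p y k in ltT *.
  set A := x k * P; set B := y k * P; set Z := (p - 1 - y k) * P; clear ep; lia.
by rewrite ea [X in _ = X %% _]addnC modnMDl.
Qed.

End Basic.
Section Struct.
Variable p : nat.
Hypothesis p_gt1 : 1 < p.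
Let p_gt0 : 0 < p. Proof. by apply: ltnW. Qed.
Let pX_gt0 k : 0 < p ^ k. Proof. by rewrite expn_gt0 p_gt0. Qed.
Variable Phi : nat -> nat.
Hypothesis Phi_inc : forall n, Phi n < Phi n.+1.
Variable f : (nat -> nat) -> (nat -> nat).
Hypothesis fF : classF p Phi f.

Lemma Phi_mono m n : m <= n -> Phi m <= Phi n.
Proof.
move=> mn; rewrite -(subnK mn); elim: (n - m) => [//|k IH].
by rewrite addSn (leq_trans IH) // ltnW.
Qed.

Lemma Phi_ge n : n <= Phi n.
Proof. elim: n => [//|n IH]; exact: leq_ltn_trans IH (Phi_inc n). Qed.

Lemma pK_mono m n : m <= n -> p ^ (Phi m).+1 <= p ^ (Phi n).+1.
Proof. by move=> mn; rewrite leq_exp2l // ltnS Phi_mono. Qed.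

Lemma pK_dvd m n : m <= n -> p ^ (Phi m).+1 %| p ^ (Phi n).+1.
Proof. by move=> mn; rewrite dvdn_exp2l // ltnS Phi_mono. Qed.

Lemma tau_eq n m : p ^ (Phi n).+1 <= m -> m < p ^ (Phi n.+1).+1 -> tau p Phi m = n.+1.
Proof.
move=> lo hi.
have nm : n.+1 <= m.
  apply: leq_trans lo; exact: leq_trans (Phi_ge n : n.+1 <= (Phi n).+1) (ltnW (ltn_expl _ p_gt1)).
have e : iota 0 m.+1 = iota 0 n.+1 ++ iota n.+1 (m - n.+1).+1.
  have em : m.+1 = n.+1 + (m - n.+1).+1 by lia.
  by rewrite {1}em iotaD.
rewrite /tau e find_cat.
case: ifP => [/hasP [i] | _].
  rewrite mem_iota add0n ltnS /= => iN.
  by rewrite ltnNge (leq_trans _ lo) // pK_mono.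
by rewrite size_iota /= hi addn0.
Qed.

Definition blk (x : nat -> nat) a b := \sum_(a <= i < b) x i * p ^ i.

Lemma trunc_split x a b : a <= b -> trunc p x b = trunc p x a + blk x a b.
Proof.
move=> ab; rewrite /trunc /blk.
rewrite -!(big_mkord xpredT (fun i => x i * p ^ i)).
by rewrite (big_cat_nat (leq0n a) ab).
Qed.

Lemma rho_blk x n : p ^ (Phi n).+1 * rho p Phi x n.+1 = blk x (Phi n).+1 (Phi n.+1).+1.
Proof.
rewrite /rho /blk /= big_distrr; apply: eq_big_nat => i /andP [i1 _] /=.
by rewrite mulnCA -expnD subnKC.
Qed.

Lemma trunc_rho x n :
  trunc p x (Phi n.+1).+1 = trunc p x (Phi n).+1 + p ^ (Phi n).+1 * rho p Phi x n.+1.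
Proof. by rewrite rho_blk -trunc_split // ltnS ltnW. Qed.

Lemma Mm_eq n m : p ^ (Phi n).+1 <= m -> m < p ^ (Phi n.+1).+1 ->
  m = m %% p ^ (Phi n).+1 + Mm p Phi m.
Proof.
move=> lo hi; rewrite /Mm (tau_eq lo hi) /=.
have := trunc_split (emb p m) (ltnW (Phi_inc n) : (Phi n).+1 <= (Phi n.+1).+1).
by rewrite !trunc_emb // (modn_small hi).
Qed.


Lemma fZp x : isZp p x -> isZp p (f x).
Proof. move=> Hx; case: fF => H _; exact: H Hx. Qed.

Lemma classF_eq n x y : 0 < n -> isZp p x -> isZp p y ->
  trunc p x (lev Phi n) = trunc p y (lev Phi n) -> trunc p (f x) n = trunc p (f y) n.
Proof. move=> n0 Hx Hy E; case: fF => _ [_ H]; exact: H n0 x y Hx Hy E. Qed.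

Lemma modsub A A' P Y : A < P -> A' < P -> (A' + P - A) %% P = Y -> A' = (A + Y) %% P.
Proof.
move=> hA hA' <-; rewrite modnDmr.
have -> : A + (A' + P - A) = A' + P by lia.
by rewrite modnDr modn_small.
Qed.

Lemma BfCore n m0 m : m0 < p ^ (Phi n).+1 -> p ^ (Phi n).+1 <= m ->
  m < p ^ (Phi n.+1).+1 -> m %% p ^ (Phi n).+1 = m0 ->
  [/\ tau p Phi m = n.+1,
      (forall k, trunc p (Bf p Phi f m) k =
         (trunc p (f (emb p m)) k + p ^ k - trunc p (f (emb p m0)) k) %% p ^ k),
      trunc p (Bf p Phi f m) n.+1 = 0 &
      forall j, trunc p (Bf p Phi f m) (n.+1 + j) = p ^ n.+1 * trunc p (bf p Phi f m) j].
Proof.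
move=> hm0 lo hi em.
have ht := tau_eq lo hi.
have eB : Bf p Phi f m = zsub p (f (emb p m)) (f (emb p m0)).
  rewrite /Bf ifF; last by rewrite ltnNge (leq_trans (pK_mono (leq0n n)) lo).
  have := Mm_eq lo hi; rewrite em => e.
  have e2 : m - Mm p Phi m = m0 by rewrite {1}e addnK.
  by rewrite e2.
have ek : forall k, trunc p (Bf p Phi f m) k =
         (trunc p (f (emb p m)) k + p ^ k - trunc p (f (emb p m0)) k) %% p ^ k.
  by move=> k; rewrite eB trunc_zsub //; apply: fZp; apply: isZp_emb.
split => //.
  rewrite ek (@classF_eq n.+1 (emb p m) (emb p m0)) //; try exact: isZp_emb.
    by rewrite addKn modnn.
  by rewrite /= !trunc_emb // em modn_small.
move=> j; rewrite trunc_shift // -ht.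
have -> : trunc p (Bf p Phi f m) (tau p Phi m) = 0.
  rewrite ht ek (@classF_eq n.+1 (emb p m) (emb p m0)) //; try exact: isZp_emb.
    by rewrite addKn modnn.
  by rewrite /= !trunc_emb // em modn_small.
by [].
Qed.

Lemma KeyEq h n m0 m : m0 < p ^ (Phi n).+1 -> p ^ (Phi n).+1 <= m ->
  m < p ^ (Phi n.+1).+1 -> m %% p ^ (Phi n).+1 = m0 ->
  trunc p (f (emb p m0)) (n.+1 + h) = 0 ->
  trunc p (f (emb p m)) (n.+1 + h.+1) =
  p ^ n.+1 * ((trunc p (f (emb p m0)) (n.+1 + h.+1) %/ p ^ (n.+1 + h) * p ^ h
               + trunc p (bf p Phi f m) h.+1) %% p ^ h.+1).
Proof.
move=> hm0 lo hi em h0.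
have [_ ek e0 ej] := BfCore hm0 lo hi em.
have Zm : isZp p (f (emb p m)) by apply: fZp; apply: isZp_emb.
have Zm0 : isZp p (f (emb p m0)) by apply: fZp; apply: isZp_emb.
set A := trunc p (f (emb p m0)) (n.+1 + h.+1).
set b := trunc p (bf p Phi f m) h.+1.
have Y := ek (n.+1 + h.+1); rewrite ej in Y.
have -> := modsub (trunc_lt _ Zm0) (trunc_lt _ Zm) (esym Y).
set a0 := A %/ p ^ (n.+1 + h).
have eA : A = a0 * p ^ (n.+1 + h).
  have H : A %% p ^ (n.+1 + h) = 0 by rewrite /A trunc_mod // leq_add2l.
  by rewrite {1}(divn_eq A (p ^ (n.+1 + h))) H addn0.
rewrite -/A -/b eA.
by rewrite muln_modr -expnD mulnDr [p ^ (n.+1 + h)]expnD mulnCA.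
Qed.

Lemma SameEq h n m0 m : m0 < p ^ (Phi n).+1 -> p ^ (Phi n).+1 <= m ->
  m < p ^ (Phi n.+1).+1 -> m %% p ^ (Phi n).+1 = m0 ->
  trunc p (bf p Phi f m) h = 0 ->
  trunc p (f (emb p m)) (n.+1 + h) = trunc p (f (emb p m0)) (n.+1 + h).
Proof.
move=> hm0 lo hi em b0.
have [_ ek e0 ej] := BfCore hm0 lo hi em.
have Zm : isZp p (f (emb p m)) by apply: fZp; apply: isZp_emb.
have Zm0 : isZp p (f (emb p m0)) by apply: fZp; apply: isZp_emb.
have Y := ek (n.+1 + h); rewrite ej b0 muln0 in Y.
rewrite (modsub (trunc_lt _ Zm0) (trunc_lt _ Zm) (esym Y)).
by rewrite addn0 modn_small // (trunc_lt _ Zm0).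
Qed.

Lemma inj_of_uniq_map (T1 T2 : eqType) (g : T1 -> T2) s x y :
  uniq (map g s) -> x \in s -> y \in s -> g x = g y -> x = y.
Proof.
move=> U xs ys E.
have ei : index x s = index y s.
  apply/eqP; rewrite -(nth_uniq (g x) _ _ U) ?size_map ?index_mem //.
  by rewrite !(nth_map x) ?index_mem // !nth_index // E.
by rewrite -(nth_index x xs) -(nth_index x ys) ei.
Qed.

Lemma blk_ok n m0 r : m0 < p ^ (Phi n).+1 -> 0 < r < p ^ (Phi n.+1 - Phi n) ->
  [/\ p ^ (Phi n).+1 <= m0 + r * p ^ (Phi n).+1,
      m0 + r * p ^ (Phi n).+1 < p ^ (Phi n.+1).+1 &
      (m0 + r * p ^ (Phi n).+1) %% p ^ (Phi n).+1 = m0].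
Proof.
move=> hm /andP [r0 rQ].
have eQ : p ^ (Phi n.+1).+1 = p ^ (Phi n.+1 - Phi n) * p ^ (Phi n).+1.
  by rewrite -expnD addnS subnK // ltnW.
split.
- by rewrite (leq_trans _ (leq_addl _ _)) // leq_pmull.
- rewrite eQ; apply: (@leq_trans (r.+1 * p ^ (Phi n).+1)).
    by rewrite mulSn; lia.
  by rewrite leq_mul2r rQ orbT.
- by rewrite addnC modnMDl modn_small.
Qed.

Variables (h n0 u : nat) (S : nat -> seq nat).
Hypothesis Hu : u < p ^ (Phi n0).+1.
Hypothesis HS : forall n, n0 <= n ->
     [/\ uniq (S n), size (S n) = p - 1 &
         forall i, i \in S n -> 0 < i < p ^ (Phi n.+1 - Phi n)].
Hypothesis Hmap : forall n m, n0 <= n -> m < p ^ (Phi n).+1 ->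
     m = u %[mod p ^ (Phi n0).+1] ->
     [seq trunc p (bf p Phi f (m + i * p ^ (Phi n).+1)) h.+1 | i <- S n]
       =i [seq i * p ^ h %% p ^ h.+1 | i <- iota 1 (p - 1)].

Definition gb n m0 r := trunc p (bf p Phi f (m0 + r * p ^ (Phi n).+1)) h.+1.

Section Fixed.
Variables (n m0 : nat).
Hypothesis nn0 : n0 <= n.
Hypothesis hm0 : m0 < p ^ (Phi n).+1.
Hypothesis um0 : m0 = u %[mod p ^ (Phi n0).+1].

Lemma jp_small j : j < p -> j * p ^ h %% p ^ h.+1 = j * p ^ h.
Proof. by move=> jp; rewrite modn_small // expnS ltn_mul2r pX_gt0. Qed.

Lemma gb_surj j : 0 < j < p -> exists2 r, r \in S n & gb n m0 r = j * p ^ h.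
Proof.
move=> /andP [j0 jp].
have : j * p ^ h %% p ^ h.+1 \in [seq i * p ^ h %% p ^ h.+1 | i <- iota 1 (p - 1)].
  by apply: map_f; rewrite mem_iota j0 /=; lia.
rewrite -(Hmap nn0 hm0 um0) => /mapP [r rS E].
by exists r => //; rewrite /gb -E jp_small.
Qed.

Lemma gb_range r : r \in S n -> exists2 j, 0 < j < p & gb n m0 r = j * p ^ h.
Proof.
move=> rS.
have : gb n m0 r \in [seq i * p ^ h %% p ^ h.+1 | i <- iota 1 (p - 1)].
  by rewrite -(Hmap nn0 hm0 um0); apply: map_f.
move=> /mapP [j]; rewrite mem_iota => jr ->.
have jp : j < p by lia.
by exists j; [lia | rewrite jp_small].
Qed.

Lemma gb_inj r1 r2 : r1 \in S n -> r2 \in S n -> gb n m0 r1 = gb n m0 r2 -> r1 = r2.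
Proof.
have [US sS _] := HS nn0.
apply: inj_of_uniq_map.
have Ut : uniq [seq i * p ^ h %% p ^ h.+1 | i <- iota 1 (p - 1)].
  rewrite map_inj_in_uniq ?iota_uniq // => a b.
  rewrite !mem_iota => ha hb.
  rewrite !jp_small; try lia.
  by move/eqP; rewrite eqn_pmul2r // => /eqP.
rewrite (uniq_size_uniq Ut (fun x => esym (Hmap nn0 hm0 um0 x))).
by rewrite !size_map size_iota sS.
Qed.

End Fixed.

Definition Q n m (i : nat) : bool :=
  trunc p (f (emb p (m + i * p ^ (Phi n).+1))) (n.+1 + h.+1) == 0.

Lemma pX_neq0 k : (p ^ k == 0) = false.
Proof. by rewrite eqn0Ngt pX_gt0. Qed.

Section Fixed2.
Variables (n m0 : nat).
Hypothesis nn0 : n0 <= n.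
Hypothesis hm0 : m0 < p ^ (Phi n).+1.
Hypothesis um0 : m0 = u %[mod p ^ (Phi n0).+1].
Hypothesis h0 : trunc p (f (emb p m0)) (n.+1 + h) = 0.

Let Zm0 : isZp p (f (emb p m0)). Proof. by apply: fZp; apply: isZp_emb. Qed.

Definition a0 := trunc p (f (emb p m0)) (n.+1 + h.+1) %/ p ^ (n.+1 + h).

Lemma A_eq : trunc p (f (emb p m0)) (n.+1 + h.+1) = a0 * p ^ (n.+1 + h).
Proof.
have H : trunc p (f (emb p m0)) (n.+1 + h.+1) %% p ^ (n.+1 + h) = 0.
  by rewrite trunc_mod // leq_add2l.
by rewrite {1}(divn_eq (trunc p (f (emb p m0)) (n.+1 + h.+1)) (p ^ (n.+1 + h))) H addn0.
Qed.

Lemma a0_lt : a0 < p.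
Proof.
rewrite /a0 ltn_divLR // mulnC -expnSr -addnS.
exact: trunc_lt.
Qed.

Lemma Q_S r : r \in S n -> Q n m0 r = ((a0 * p ^ h + gb n m0 r) %% p ^ h.+1 == 0).
Proof.
move=> rS; have [_ _ rr] := HS nn0.
have [lo hi em] := blk_ok hm0 (rr r rS).
by rewrite /Q (KeyEq hm0 lo hi em h0) muln_eq0 pX_neq0.
Qed.

Lemma Q_0 : Q n m0 0 = (a0 == 0).
Proof.
by rewrite /Q mul0n addn0 A_eq muln_eq0 pX_neq0 orbF.
Qed.

Lemma has_Q : has (Q n m0) (0 :: S n).
Proof.
case: (posnP a0) => [a00 | a0pos].
  by rewrite /= Q_0 a00.
have [r rS E] := @gb_surj n m0 nn0 hm0 um0 (p - a0) ltac:(have := a0_lt; lia).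
apply/hasP; exists r; first by rewrite inE rS orbT.
rewrite Q_S // E -mulnDl subnKC; last exact: ltnW a0_lt.
by rewrite expnS modnn.
Qed.

Lemma Q_uniq r1 r2 : r1 \in 0 :: S n -> r2 \in 0 :: S n ->
  Q n m0 r1 -> Q n m0 r2 -> r1 = r2.
Proof.
have [_ _ rr] := HS nn0.
case: (posnP a0) => [a00 | a0pos].
  have H : forall r, r \in 0 :: S n -> Q n m0 r -> r = 0.
    move=> r; rewrite inE => /orP [/eqP // | rS].
    rewrite Q_S // a00 mul0n add0n.
    have [j /andP [j0 jp] ->] := @gb_range n m0 nn0 hm0 um0 r rS.
    by rewrite jp_small // muln_eq0 pX_neq0 orbF eqn0Ngt j0.
  by move=> h1 h2 q1 q2; rewrite (H _ h1 q1) (H _ h2 q2).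
have H : forall r, r \in 0 :: S n -> Q n m0 r -> r \in S n.
  move=> r; rewrite inE => /orP [/eqP -> | //].
  by rewrite Q_0 eqn0Ngt a0pos.
move=> h1 h2 q1 q2.
have r1S := H _ h1 q1; have r2S := H _ h2 q2.
apply: (@gb_inj n m0 nn0 hm0 um0) => //.
rewrite Q_S // in q1; rewrite Q_S // in q2.
have [j1 /andP [_ j1p] e1] := @gb_range n m0 nn0 hm0 um0 r1 r1S.
have [j2 /andP [_ j2p] e2] := @gb_range n m0 nn0 hm0 um0 r2 r2S.
have : (a0 * p ^ h + gb n m0 r1 == a0 * p ^ h + gb n m0 r2 %[mod p ^ h.+1]).
  by rewrite (eqP q1) (eqP q2).
rewrite eqn_modDl e1 e2 !jp_small // => /eqP ->.
by [].
Qed.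

End Fixed2.

Hypothesis Hf0 : trunc p (f (emb p u)) (1 + h + n0) = 0.

Lemma modDM m q d : (m + q * d) %% d = m %% d.
Proof. by rewrite addnC modnMDl. Qed.

Definition step n m := m + nth 0 (0 :: S n) (find (Q n m) (0 :: S n)) * p ^ (Phi n).+1.
Fixpoint ms j := if j is j'.+1 then step (n0 + j') (ms j') else u.

Lemma step_spec n m : n0 <= n -> m < p ^ (Phi n).+1 -> m = u %[mod p ^ (Phi n0).+1] ->
  trunc p (f (emb p m)) (n.+1 + h) = 0 ->
  exists r, [/\ r \in 0 :: S n, step n m = m + r * p ^ (Phi n).+1, Q n m r &
                r < p ^ (Phi n.+1 - Phi n)].
Proof.
move=> nn hm um h0.
have hq := has_Q nn hm um h0.
set r := nth 0 (0 :: S n) (find (Q n m) (0 :: S n)).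
have rin : r \in 0 :: S n by rewrite mem_nth // -has_find.
exists r; split => //; first exact: nth_find.
move: rin; rewrite inE => /orP [/eqP -> | rS]; first exact: pX_gt0.
by have [_ _ rr] := HS nn; case/andP: (rr r rS).
Qed.

Lemma ms_inv j : [/\ ms j < p ^ (Phi (n0 + j)).+1, ms j = u %[mod p ^ (Phi n0).+1] &
  trunc p (f (emb p (ms j))) ((n0 + j).+1 + h) = 0].
Proof.
elim: j => [|j [hm um h0]].
  by rewrite addn0 /=; split => //; rewrite -Hf0; congr trunc; lia.
have [r [rin e q rlt]] := step_spec (leq_addr j n0) hm um h0.
rewrite [ms j.+1]/= e.
have -> : n0 + j.+1 = (n0 + j).+1 by rewrite addnS.
split.
- case: (posnP r) => [-> | r0]; first by rewrite mul0n addn0 (leq_trans hm) // pK_mono.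
  by have [_ ok _] := blk_ok hm (introT andP (conj r0 rlt)).
- have := pK_dvd (leq_addr j n0); case/dvdnP => c ec.
  by rewrite ec mulnA modDM.
- have -> : (n0 + j).+2 + h = (n0 + j).+1 + h.+1 by rewrite addSn addnS.
  exact/eqP.
Qed.

Lemma ms_step j : exists r, r \in 0 :: S (n0 + j) /\
  ms j.+1 = ms j + r * p ^ (Phi (n0 + j)).+1.
Proof.
have [hm um h0] := ms_inv j.
have [r [rin e _ _]] := step_spec (leq_addr j n0) hm um h0.
by exists r; rewrite [ms j.+1]/= e.
Qed.

Lemma ms_chain a b : a <= b -> ms b %% p ^ (Phi (n0 + a)).+1 = ms a.
Proof.
move=> ab; rewrite -(subnKC ab); elim: (b - a) => [|k IH].
  by rewrite addn0 modn_small //; case: (ms_inv a).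
rewrite addnS; have [r [_ ->]] := ms_step (a + k).
have := pK_dvd (leq_addr k (n0 + a)); rewrite -addnA; case/dvdnP => c ec.
by rewrite ec mulnA modDM.
Qed.

Lemma digit_mod m k i : i < k -> digit p (m %% p ^ k) i = digit p m i.
Proof.
move=> ik.
apply: (trunc_ext p_gt1 (isZp_emb p_gt1 (m %% p ^ k)) (isZp_emb p_gt1 m) _ ik).
by rewrite !trunc_emb modn_mod.
Qed.

Definition xi k := digit p (ms k) k.

Lemma xi_Zp : isZp p xi.
Proof. by move=> i; rewrite /xi /digit ltn_pmod. Qed.

Lemma xi_trunc j : trunc p xi (Phi (n0 + j)).+1 = ms j.
Proof.
have [hm _ _] := ms_inv j.
rewrite -(modn_small hm) -trunc_emb; apply: eq_bigr => [[i hi]] _ /=; congr (_ * _).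
rewrite /xi /emb; case: (leqP i j) => ij.
  have ik : i < (Phi (n0 + i)).+1.
    by rewrite ltnS (leq_trans (leq_addl n0 i)) // Phi_ge.
  by rewrite -(ms_chain ij) digit_mod.
by rewrite -(ms_chain (ltnW ij)) digit_mod.
Qed.

Lemma existence : exists xi, [/\ isZp p xi,
       zeroZp (f xi),
       trunc p xi (Phi n0).+1 = u %% p ^ (Phi n0).+1 &
       forall n, n0 <= n -> rho p Phi xi n.+1 \in 0 :: S n].
Proof.
exists xi; split.
- exact: xi_Zp.
- move=> i.
  have [hm _ h0] := ms_inv i.
  have E : trunc p (f xi) (n0 + i).+1 = trunc p (f (emb p (ms i))) (n0 + i).+1.
    apply: classF_eq => //; [exact: xi_Zp | exact: isZp_emb |].
    by rewrite /= xi_trunc trunc_emb modn_small.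
  have Z : trunc p (f xi) (n0 + i).+1 = 0.
    by rewrite E -(trunc_mod (k := (n0 + i).+1 + h)) ?h0 ?mod0n ?leq_addr //; apply: fZp; exact: isZp_emb.
  apply: (trunc_zero p_gt1 (fZp xi_Zp) Z); by rewrite ltnS leq_addl.
- by have := xi_trunc 0; rewrite addn0 => ->; rewrite modn_small.
- move=> n nn; rewrite -(subnKC nn); set j := n - n0.
  have := trunc_rho xi (n0 + j); rewrite -addnS !xi_trunc.
  have [r [rin ->]] := ms_step j.
  move/eqP; rewrite eqn_add2l mulnC eqn_pmul2l // => /eqP <-.
  by [].
Qed.

Hypothesis Hb : forall m, p ^ (Phi n0).+1 <= m -> m = u %[mod p ^ (Phi n0).+1] ->
      trunc p (bf p Phi f m) h = 0.

Section Uniq.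
Variable x : nat -> nat.
Hypotheses (xZ : isZp p x) (xz : zeroZp (f x)) (xu : trunc p x (Phi n0).+1 = u %% p ^ (Phi n0).+1).

Let mm N := trunc p x (Phi N).+1.

Lemma mm_u N : n0 <= N -> mm N = u %[mod p ^ (Phi n0).+1].
Proof. by move=> nN; rewrite /mm trunc_mod // ltnS Phi_mono. Qed.

Lemma V N : n0 <= N ->
  trunc p (f (emb p (mm N.+1))) (N.+1 + h) = trunc p (f (emb p (mm N))) (N.+1 + h).
Proof.
move=> nN; have er := trunc_rho x N; rewrite -/(mm N.+1) -/(mm N) in er.
case: (posnP (rho p Phi x N.+1)) => [r0 | rpos].
  by rewrite er r0 muln0 addn0.
have lo : p ^ (Phi N).+1 <= mm N.+1.
  by rewrite er (leq_trans _ (leq_addl _ _)) // leq_pmulr.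
have hi : mm N.+1 < p ^ (Phi N.+1).+1 by apply: trunc_lt.
have em : mm N.+1 %% p ^ (Phi N).+1 = mm N by rewrite /mm trunc_mod // ltnS ltnW.
apply: (SameEq (trunc_lt _ xZ) lo hi em).
apply: Hb; first by rewrite (leq_trans _ lo) // pK_mono.
by apply: mm_u; apply: leqW.
Qed.

Lemma Vchain n N : n0 <= n -> n <= N ->
  trunc p (f (emb p (mm N))) (n.+1 + h) = trunc p (f (emb p (mm n))) (n.+1 + h).
Proof.
move=> nn nN; rewrite -(subnKC nN); elim: (N - n) => [|k IH]; first by rewrite addn0.
have Z : isZp p (f (emb p (mm (n + k).+1))) by apply: fZp; exact: isZp_emb.
have Z' : isZp p (f (emb p (mm (n + k)))) by apply: fZp; exact: isZp_emb.
rewrite addnS -(trunc_mod (k := (n + k).+1 + h)) // ?leq_add2r ?ltnS ?leq_addr //.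
rewrite V ?(leq_trans nn) ?leq_addr // trunc_mod // ?leq_add2r ?ltnS ?leq_addr //.
Qed.

Lemma uniq_f0 n : n0 <= n -> trunc p (f (emb p (mm n))) (n.+1 + h) = 0.
Proof.
move=> nn.
rewrite -(Vchain nn (leq_addr h n)).
have -> : trunc p (f (emb p (mm (n + h)))) (n.+1 + h) = trunc p (f x) (n.+1 + h).
  rewrite addSn; apply: classF_eq => //; [exact: isZp_emb | ].
  by rewrite /= trunc_emb modn_small // /mm trunc_lt.
by rewrite /trunc big1 // => i _; rewrite xz.
Qed.

End Uniq.

Lemma uniqueness xi1 xi2 :
     isZp p xi1 -> zeroZp (f xi1) -> trunc p xi1 (Phi n0).+1 = u %% p ^ (Phi n0).+1 ->
     (forall n, n0 <= n -> rho p Phi xi1 n.+1 \in 0 :: S n) ->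
     isZp p xi2 -> zeroZp (f xi2) -> trunc p xi2 (Phi n0).+1 = u %% p ^ (Phi n0).+1 ->
     (forall n, n0 <= n -> rho p Phi xi2 n.+1 \in 0 :: S n) ->
     forall i, xi1 i = xi2 i.
Proof.
move=> Z1 z1 u1 r1 Z2 z2 u2 r2.
have T : forall j, trunc p xi1 (Phi (n0 + j)).+1 = trunc p xi2 (Phi (n0 + j)).+1.
  elim=> [|j IH]; first by rewrite addn0 u1 u2.
  rewrite addnS !trunc_rho -IH.
  set n := n0 + j; set m0 := trunc p xi1 (Phi n).+1.
  have nn : n0 <= n by rewrite leq_addr.
  have hm : m0 < p ^ (Phi n).+1 by apply: trunc_lt.
  have um : m0 = u %[mod p ^ (Phi n0).+1] by apply: (mm_u Z1 u1).
  have h0 : trunc p (f (emb p m0)) (n.+1 + h) = 0 by apply: (uniq_f0 Z1 z1 u1).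
  have q : forall y, isZp p y -> zeroZp (f y) -> trunc p y (Phi n0).+1 = u %% p ^ (Phi n0).+1 ->
     trunc p y (Phi n).+1 = m0 -> Q n m0 (rho p Phi y n.+1).
    move=> y Zy zy uy ey.
    rewrite /Q mulnC -ey -trunc_rho -addSnnS.
    by apply/eqP; apply: (uniq_f0 Zy zy uy); apply: leqW.
  rewrite (Q_uniq nn hm um h0 (r1 _ nn) (r2 _ nn) (q _ Z1 z1 u1 erefl) (q _ Z2 z2 u2 (esym IH))).
  by [].
move=> i; apply: (trunc_ext p_gt1 Z1 Z2 (T i)).
by rewrite ltnS (leq_trans (leq_addl n0 i)) // Phi_ge.
Qed.
End Struct.

Theorem theorem2 (p : nat) (Phi : nat -> nat) (f : (nat -> nat) -> (nat -> nat))
  (h n0 u : nat) (S : nat -> seq nat) :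
  prime p ->
  (forall n, Phi n < Phi n.+1) ->
  classF p Phi f ->
  u < p ^ (Phi n0).+1 ->
  trunc p (f (emb p u)) (1 + h + n0) = 0 ->
  (forall n, n0 <= n ->
     [/\ uniq (S n), size (S n) = p - 1 &
         forall i, i \in S n -> 0 < i < p ^ (Phi n.+1 - Phi n)]) ->
  (forall n m, n0 <= n -> m < p ^ (Phi n).+1 ->
     m = u %[mod p ^ (Phi n0).+1] ->
     [seq trunc p (bf p Phi f (m + i * p ^ (Phi n).+1)) h.+1 | i <- S n]
       =i [seq i * p ^ h %% p ^ h.+1 | i <- iota 1 (p - 1)]) ->
  (exists xi, [/\ isZp p xi,
       zeroZp (f xi),
       trunc p xi (Phi n0).+1 = u %% p ^ (Phi n0).+1 &
       forall n, n0 <= n -> rho p Phi xi n.+1 \in 0 :: S n])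
  /\
  ((forall m, p ^ (Phi n0).+1 <= m -> m = u %[mod p ^ (Phi n0).+1] ->
      trunc p (bf p Phi f m) h = 0) ->
   forall xi1 xi2,
     isZp p xi1 -> zeroZp (f xi1) -> trunc p xi1 (Phi n0).+1 = u %% p ^ (Phi n0).+1 ->
     (forall n, n0 <= n -> rho p Phi xi1 n.+1 \in 0 :: S n) ->
     isZp p xi2 -> zeroZp (f xi2) -> trunc p xi2 (Phi n0).+1 = u %% p ^ (Phi n0).+1 ->
     (forall n, n0 <= n -> rho p Phi xi2 n.+1 \in 0 :: S n) ->
     forall i, xi1 i = xi2 i).
Proof.
move=> pr Hinc fF Hu Hf0 HS Hmap.
have p1 := prime_gt1 pr.
split; first exact: (existence p1 Hinc fF Hu HS Hmap Hf0).
move=> Hb; exact: (uniqueness p1 Hinc fF Hu HS Hmap Hb).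
Qed.
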